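(* Suppose $F$ is symmetric ($F(-i)=1-F(i)$ for all $i$). Fix $R\in(0,1)$, let $\beta=F(1/2-R)$, fix $\sigma>0$, and regard the value $V$ of the recommendation system as a function of $Q\in(0,1/2)$, where $q_H=\frac{(1-2Q)\sigma}{1+\sigma}$, $q_L=\frac{1-2Q}{1+\sigma}$ and $q_1+q_2=2Q$ (with $q_1,q_2>0$). Then: (i) if $3\sigma-\beta-\sigma^2+\sigma^2\beta>0$, the value is decreasing in $Q$; in particular this is the case when $\sigma=1$; (ii) if $3\sigma-\beta-\sigma^2+\sigma^2\beta<0$, then $Q^*=\frac{3\sigma-\beta-\sigma^2+\sigma^2\beta}{4\sigma-4\beta-4\sigma^2+4\sigma^2\beta}$ lies in $(0,1/2)$ and maximizes the value over $Q\in(0,1/2)$.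
   Context: Setting. Consumer types are $i\in[-1/2,1/2]$, distributed according to a continuous cumulative distribution function $F$ with full support on $[-1/2,1/2]$. A product has a quality vector $(Q_1,Q_2)\in\{0,1\}^2$; a type-$i$ consumer gets payoff $(1/2+i)Q_1+(1/2-i)Q_2$ from it. The versions $(1,1),(1,0),(0,1),(0,0)$ have prior probabilities $q_H,q_1,q_2,q_L$, all strictly positive and summing to $1$. Given a threshold $R\in(0,1)$, a sender with type drawn from $F$ independently of the product gives a buy recommendation $B$ if her payoff is at least $R$ and a don't-buy recommendation $D$ otherwise. Let $\phi_1(R)=1-F(R-1/2)$, $\phi_2(R)=F(1/2-R)$, $\pi^B=q_H+q_1\phi_1(R)+q_2\phi_2(R)$, $\pi^D=1-\pi^B$. Posteriors: $p^B_H=q_H/\pi^B$, $p^B_1=q_1\phi_1(R)/\pi^B$, $p^B_2=q_2\phi_2(R)/\pi^B$; $p^D_H=0$, $p^D_1=q_1(1-\phi_1(R))/\pi^D$, $p^D_2=q_2(1-\phi_2(R))/\pi^D$. Let $U_i^r=p_H^r+(1/2+i)p_1^r+(1/2-i)p_2^r$ for $r\in\{B,D\}$ and $U_i^0=q_H+(1/2+i)q_1+(1/2-i)q_2$. The value of the recommendation system is $V=\pi^B\int_{-1/2}^{1/2}\max\{U_i^B-U_i^0,0\}\,dF(i)+\pi^D\int_{-1/2}^{1/2}\max\{U_i^D-U_i^0,0\}\,dF(i)$. Under symmetry this depends on the primitives only through $Q=(q_1+q_2)/2$, $\sigma=q_H/q_L$ and $\beta$. *)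

(* Defs.v *)
(* R : realType, consumer-type distribution given by a
   probability measure P on R (Borel sets) whose CDF is F. *)
From HB Require Import structures.
From mathcomp Require Import all_boot all_order all_algebra.
From mathcomp Require Import all_classical all_reals all_analysis.
Set Implicit Arguments. Unset Strict Implicit. Unset Printing Implicit Defensive.
Import Order.TTheory GRing.Theory Num.Theory.
Import numFieldNormedType.Exports.
Local Open Scope classical_set_scope.
Local Open Scope ring_scope.

Section RecSys.
Variable R : realType.

Definition type_cdf (P : probability R R) (x : R) : R := fine (P `]-oo, x]%classic).

Variable F : R -> R.

Definition phi1 (Rt : R) : R := 1 - F (Rt - 2^-1).
Definition phi2 (Rt : R) : R := F (2^-1 - Rt).

Variables (qH q1 q2 Rt : R).

Definition piB : R := qH + q1 * phi1 Rt + q2 * phi2 Rt.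
Definition piD : R := 1 - piB.

Definition pBH : R := qH / piB.
Definition pB1 : R := q1 * phi1 Rt / piB.
Definition pB2 : R := q2 * phi2 Rt / piB.
Definition pDH : R := 0.
Definition pD1 : R := q1 * (1 - phi1 Rt) / piD.
Definition pD2 : R := q2 * (1 - phi2 Rt) / piD.

Definition UB (i : R) : R := pBH + (2^-1 + i) * pB1 + (2^-1 - i) * pB2.
Definition UD (i : R) : R := pDH + (2^-1 + i) * pD1 + (2^-1 - i) * pD2.
Definition U0 (i : R) : R := qH + (2^-1 + i) * q1 + (2^-1 - i) * q2.

(* value of the recommendation system; the integral dF(i) over [-1/2,1/2]
   is the (real-valued) Lebesgue integral w.r.t. the law P whose CDF is F *)
Definition value (P : probability R R) : R :=
  piB * (\int[P]_(i in `[- 2^-1, 2^-1]%classic) Num.max (UB i - U0 i) 0)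
  + piD * (\int[P]_(i in `[- 2^-1, 2^-1]%classic) Num.max (UD i - U0 i) 0).

End RecSys.

(* Main.v *)
Require Import Defs.
From HB Require Import structures.
From mathcomp Require Import all_boot all_order all_algebra.
From mathcomp Require Import all_classical all_reals all_analysis.
From mathcomp Require Import ring lra measurable_realfun.
Import Order.TTheory GRing.Theory Num.Theory.
Import numFieldNormedType.Exports.
Local Open Scope classical_set_scope.
Local Open Scope ring_scope.

Section Alg.
Variable R : realFieldType.

Lemma posE (qH q1 q2 b t : R) : 0 < qH -> 0 < q1 -> 0 < q2 -> qH + q1 + q2 < 1 ->
  0 < b < 1 -> 0 <= t <= 1 ->
  0 < qH * (1 - qH - (q1 + q2) * b) + (t * q1 + (1 - t) * q2) * (b - qH - (q1 + q2) * b).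
Proof.
move=> h1 h2 h3 h4 /andP[b0 b1] /andP[t0 t1].
set S := q1 + q2; set a := t * q1 + (1 - t) * q2.
have a0 : 0 <= a by rewrite /a addr_ge0 // mulr_ge0 // ?subr_ge0 // ltW.
have aS : 0 <= S - a.
  have -> : S - a = (1 - t) * q1 + t * q2 by rewrite /S /a; ring.
  by rewrite addr_ge0 // mulr_ge0 // ?subr_ge0 // ltW.
have S0 : 0 < S by rewrite /S; lra.
have Sb : S * b < S by rewrite -subr_gt0 -{1}(mulr1 S) -mulrBr mulr_gt0 // subr_gt0.
have Sb0 : 0 < S * b by rewrite mulr_gt0.
have E0 : 0 < qH * (1 - qH - S * b) by rewrite mulr_gt0 //; rewrite /S in Sb *; lra.
have ES : 0 < (1 - qH - S) * (qH + S * b) by rewrite mulr_gt0 //; rewrite /S in Sb0 *; lra.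
have key : S * (qH * (1 - qH - S * b) + a * (b - qH - S * b)) =
   (S - a) * (qH * (1 - qH - S * b)) + a * ((1 - qH - S) * (qH + S * b)) by ring.
have : 0 < S * (qH * (1 - qH - S * b) + a * (b - qH - S * b)).
  rewrite key; have [a0'|a0'] := ltP 0 a.
    have : 0 <= (S - a) * (qH * (1 - qH - S * b)) by apply: mulr_ge0 => //; lra.
    have : 0 < a * ((1 - qH - S) * (qH + S * b)) by apply: mulr_gt0.
    lra.
  have -> : a = 0 by lra.
  rewrite mul0r addr0 subr0; exact: mulr_gt0.
by rewrite pmulr_rgt0.
Qed.

Lemma negE (qH q1 q2 b t : R) : 0 < qH -> 0 < q1 -> 0 < q2 -> qH + q1 + q2 < 1 ->
  0 < b < 1 -> 0 <= t <= 1 ->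
  (1 - b) * (t * q1 + (1 - t) * q2) - (1 - qH - (q1 + q2) * b) * (qH + (t * q1 + (1 - t) * q2)) < 0.
Proof.
move=> h1 h2 h3 h4 /andP[b0 b1] /andP[t0 t1].
set S := q1 + q2; set a := t * q1 + (1 - t) * q2.
have a0 : 0 <= a by rewrite /a addr_ge0 // mulr_ge0 // ?subr_ge0 // ltW.
have aS : 0 <= S - a.
  have -> : S - a = (1 - t) * q1 + t * q2 by rewrite /S /a; ring.
  by rewrite addr_ge0 // mulr_ge0 // ?subr_ge0 // ltW.
have S0 : 0 < S by rewrite /S; lra.
have Sb : S * b < S by rewrite -subr_gt0 -{1}(mulr1 S) -mulrBr mulr_gt0 // subr_gt0.
have Sb0 : 0 < S * b by rewrite mulr_gt0.
have E0 : 0 < (1 - qH - S * b) * qH by rewrite mulr_gt0 //; rewrite /S in Sb *; lra.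
have ES : 0 < (1 - qH - S) * (qH + S * b) by rewrite mulr_gt0 //; rewrite /S in Sb0 *; lra.
have key : S * ((1 - b) * a - (1 - qH - S * b) * (qH + a)) =
   - ((S - a) * ((1 - qH - S * b) * qH) + a * ((1 - qH - S) * (qH + S * b))) by ring.
have : S * ((1 - b) * a - (1 - qH - S * b) * (qH + a)) < 0.
  rewrite key oppr_lt0; have [a0'|a0'] := ltP 0 a.
    have : 0 <= (S - a) * ((1 - qH - S * b) * qH) by apply: mulr_ge0 => //; lra.
    have : 0 < a * ((1 - qH - S) * (qH + S * b)) by apply: mulr_gt0.
    lra.
  have -> : a = 0 by lra.
  rewrite mul0r addr0 subr0; exact: mulr_gt0.
by rewrite pmulr_rlt0.
Qed.

Definition W (s b Q : R) :=
  let qH := (1 - 2 * Q) * s / (1 + s) in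
  qH * (1 - qH - 2 * Q * b) + Q * (b - qH - 2 * Q * b).

Lemma Wdiff s b Q Q' : 0 < s ->
  (W s b Q' - W s b Q) * (1 + s) ^+ 2 =
  (Q' - Q) * (- (3 * s - b - s ^+ 2 + s ^+ 2 * b) + 2 * (s - b - s ^+ 2 + b * s ^+ 2) * (Q + Q')).
Proof.
move=> s0; rewrite /W; field.
by rewrite lt0r_neq0 //; lra.
Qed.

Lemma cd_pos (s b : R) : 0 < s -> 0 < b < 1 ->
  0 < (3 * s - b - s ^+ 2 + s ^+ 2 * b) - 2 * (s - b - s ^+ 2 + b * s ^+ 2).
Proof.
move=> s0 /andP[b0 b1].
have -> : (3 * s - b - s ^+ 2 + s ^+ 2 * b) - 2 * (s - b - s ^+ 2 + b * s ^+ 2)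
  = s + b + s ^+ 2 * (1 - b) by ring.
have : 0 < s ^+ 2 * (1 - b) by rewrite mulr_gt0 ?exprn_gt0 // subr_gt0.
lra.
Qed.

Lemma Wi s b Q Q' : 0 < s -> 0 < b < 1 -> 0 < 3 * s - b - s ^+ 2 + s ^+ 2 * b ->
  0 < Q -> Q < Q' -> Q' < 2^-1 -> W s b Q' < W s b Q.
Proof.
move=> s0 hb c0 Q0 QQ Q1.
have h := Wdiff s b Q Q' s0.
have hcd := cd_pos s b s0 hb.
set c := 3 * s - b - s ^+ 2 + s ^+ 2 * b in h hcd c0.
set d := s - b - s ^+ 2 + b * s ^+ 2 in h hcd.
have hh : 2^-1 + 2^-1 = 1 :> R by rewrite -mulr2n -[_ *+ 2]mulr_natr mulVf // pnatr_eq0.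
have neg : - c + 2 * d * (Q + Q') < 0.
  have [d0|d0] := leP d 0.
    have : 0 <= - (2 * d) * (Q + Q') by apply: mulr_ge0; lra.
    lra.
  have : 2 * d * (Q + Q') < 2 * d * 1.
    by rewrite ltr_pM2l; lra.
  lra.
have : (W s b Q' - W s b Q) * (1 + s) ^+ 2 < 0.
  by rewrite h pmulr_rlt0 ?subr_gt0.
rewrite pmulr_llt0 ?exprn_gt0 //; last lra.
lra.
Qed.

Lemma Wii s b : 0 < s -> 0 < b < 1 -> 3 * s - b - s ^+ 2 + s ^+ 2 * b < 0 ->
  let Qs := (3 * s - b - s ^+ 2 + s ^+ 2 * b) /
     (4 * s - 4 * b - 4 * s ^+ 2 + 4 * s ^+ 2 * b) in
  0 < Qs < 2^-1 /\ forall Q, W s b Q <= W s b Qs.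
Proof.
move=> s0 hb c0.
have hcd := cd_pos s b s0 hb.
have E4 : 4 * s - 4 * b - 4 * s ^+ 2 + 4 * s ^+ 2 * b = 4 * (s - b - s ^+ 2 + b * s ^+ 2) by ring.
rewrite E4.
set c := 3 * s - b - s ^+ 2 + s ^+ 2 * b in hcd c0 *.
set d := s - b - s ^+ 2 + b * s ^+ 2 in hcd *.
move=> Qs.
have d0 : d < 0 by lra.
have d4 : 4 * d != 0 by apply/negP => /eqP h; lra.
have hQs : Qs * (4 * d) = c by rewrite /Qs mulfVK.
split.
  apply/andP; split.
    have : 0 < Qs * (- (4 * d)) by rewrite mulrN hQs; lra.
    rewrite pmulr_lgt0 //; lra.
  have : 2^-1 * (- (4 * d)) = - (2 * d).
    by rewrite mulrN mulrA; congr (- (_ * _)); rewrite -[4]/(2 * 2)%:R natrM mulrA mulVf ?mul1r // pnatr_eq0.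
  move=> h2.
  rewrite -(ltr_pM2r (_ : 0 < - (4 * d))); last lra.
  rewrite h2 mulrN hQs; lra.
move=> Q.
have h := Wdiff s b Q Qs s0.
rewrite -/c -/d in h.
have : 0 <= (W s b Qs - W s b Q) * (1 + s) ^+ 2.
  rewrite h -hQs.
  have -> : (Qs - Q) * (- (Qs * (4 * d)) + 2 * d * (Q + Qs)) = (- (2 * d)) * (Qs - Q) ^+ 2 by ring.
  apply: mulr_ge0; [lra| exact: sqr_ge0].
rewrite pmulr_lge0 ?exprn_gt0 //; last lra.
lra.
Qed.
End Alg.

Section S.
Variables (R : realType) (P : probability R R) (F : R -> R).
Definition pr (A : set R) : R := fine (P A).
Lemma PE A : measurable A -> P A = (pr A)%:E.
Proof. by move=> mA; rewrite /pr fineK // fin_num_measure. Qed.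
Lemma prU A B : measurable A -> measurable B -> A `&` B = set0 ->
  pr (A `|` B) = pr A + pr B.
Proof.
move=> mA mB AB; rewrite /pr measureU // fineD ?fin_num_measure //.
Qed.
Lemma prle A B : measurable A -> measurable B -> A `<=` B -> pr A <= pr B.
Proof. move=> mA mB AB; rewrite -lee_fin -!PE //; by apply: le_measure; rewrite ?inE. Qed.
Hypothesis HF : forall x, F x = type_cdf P x.
Hypothesis Fc : continuous F.

Lemma Fpr x : F x = pr `]-oo, x]. Proof. by rewrite HF. Qed.

Lemma prlt x : pr `]-oo, x[ = F x.
Proof.
have le1 : pr `]-oo, x[ <= F x.
  rewrite Fpr; apply: prle => // y; rewrite /= !in_itv /= => /ltW //.
apply/eqP; rewrite eq_le le1 /=; rewrite leNgt; apply/negP => lt.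
set p := (pr `]-oo, x[) in le1 lt *.
have e0 : 0 < F x - p by rewrite subr_gt0.
have := Fc x; move/cvgr_dist_lt => /(_ _ e0) /nbhs_ballP [d /= d0 Hd].
have bt : ball x d (x - d / 2).
  rewrite /ball /= opprB addrC subrK ger0_norm; lra.
have := Hd _ bt; rewrite /=.
have : F (x - d/2) <= p.
  rewrite Fpr; apply: prle => // y; rewrite /= !in_itv /= => yx; lra.
move=> h1 h2.
have := ler_norm (F x - F (x - d / 2)). lra.
Qed.

Lemma prsplit A B C : measurable A -> measurable B -> C = A `|` B ->
  A `&` B = set0 -> pr C = pr A + pr B.
Proof. by move=> mA mB -> AB; apply: prU. Qed.

Lemma proc a b : a <= b -> pr `]a, b] = F b - F a.
Proof.
move=> ab; rewrite !Fpr.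
rewrite (@prsplit `]-oo, a] `]a, b] `]-oo, b]) //; first lra.
  apply/seteqP; split => y /=; rewrite !in_itv /= ?andbT.
    by move=> yb; case: (leP y a) => ya; [left|right] => //; rewrite ya yb.
  by case => [ya | /andP[_ yb]] //; apply: le_trans ya ab.
apply/seteqP; split => y //=; rewrite !in_itv /= => -[ya /andP[ay _]]; lra.
Qed.

Lemma prco a b : a <= b -> pr `[a, b[ = F b - F a.
Proof.
move=> ab; rewrite -!prlt.
rewrite (@prsplit `]-oo, a[ `[a, b[ `]-oo, b[) //; first lra.
  apply/seteqP; split => y /=; rewrite !in_itv /= ?andbT.
    by move=> yb; case: (ltP y a) => ya; [left|right] => //; rewrite ya yb.
  by case => [ya | /andP[_ yb]] //; apply: lt_le_trans ya ab.
apply/seteqP; split => y //=; rewrite !in_itv /= => -[ya /andP[ay _]]; lra.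
Qed.

Lemma prcc a b : a <= b -> pr `[a, b] = F b - F a.
Proof.
move=> ab; rewrite -(prlt a) (Fpr b).
rewrite (@prsplit `]-oo, a[ `[a, b] `]-oo, b]) //; first lra.
  apply/seteqP; split => y /=; rewrite !in_itv /= ?andbT.
    by move=> yb; case: (ltP y a) => ya; [left|right] => //; rewrite ya yb.
  by case => [ya | /andP[_ yb]] //; apply: ltW; apply: lt_le_trans ya ab.
apply/seteqP; split => y //=; rewrite !in_itv /= => -[ya /andP[ay _]]; lra.
Qed.

Hypothesis Fsym : forall i, F (- i) = 1 - F i.

Lemma Psym (A : set R) : measurable A -> P ((-%R) @^-1` A) = P A.
Proof.
move=> mA.
have := (@g_sigma_algebra_measure_unique _ R R R.-ocitv.-measurable _
  (fun n => `]-(n%:R), n%:R]%classic) _ _ (pushforward P (-%R)) P).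
apply => //.
- move=> X oX; exact: sub_sigma_algebra.
- by move=> n; exists (- n%:R, n%:R).
- apply/seteqP; split => // x _.
  exists (Num.truncn `|x|).+1 => //=.
  have := truncnS_gt `|x|; rewrite ltr_norml => /andP[h1 h2].
  by rewrite in_itv /= h1 ltW.
- exact: ocitvI.
- move=> X /ocitvP [->|[[a b] /= ab ->]].
    by rewrite !measure0.
  rewrite /pushforward opp_preimage_itvbndbnd /=.
  rewrite PE // PE // prco ?proc; [|exact: ltW|]; last by rewrite lerN2 ltW.
  by rewrite !Fsym; congr (_%:E); lra.
- move=> k; rewrite /pushforward.
  rewrite /= -ge0_fin_numE ?fin_num_measure //.
    by have := @oppr_measurable R setT measurableT _ (measurable_itv `]-(k%:R), k%:R]); rewrite setTI.
  exact: measure_ge0.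
Qed.

Definition DD : set R := `[- 2^-1, 2^-1]%classic.

Lemma mDD : measurable DD. Proof. exact: measurable_itv. Qed.

Lemma int_lin a g : P.-integrable DD (EFin \o (fun x => a + g * x)).
Proof.
apply: measurable_bounded_integrable; first exact: mDD.
- rewrite -ge0_fin_numE ?fin_num_measure //; exact: mDD.
- apply: measurable_funD; first exact: measurable_cst.
  apply: measurable_funM; first exact: measurable_cst.
  exact: measurable_id.
- rewrite /bounded_near; near=> M => t; rewrite /DD /= in_itv /= => /andP[t1 t2].
  apply: (@le_trans _ _ (`|a| + `|g|)).
    apply: le_trans (ler_normD _ _) _; rewrite lerD2l normrM.
    rewrite -[X in _ <= X]mulr1; apply: ler_wpM2l => //.
    rewrite ler_norml; lra.
  near: M; apply: nbhs_pinfty_ge; exact: num_real.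
Unshelve. all: end_near.
Qed.

Lemma int_id : P.-integrable DD (EFin \o (fun x => x)).
Proof.
apply: (@eq_integrable _ _ _ P DD mDD (EFin \o (fun x => 0 + 1 * x))); last exact: int_lin.
by move=> x _ /=; rewrite add0r mul1r.
Qed.

Lemma preDD : -%R @^-1` DD = DD.
Proof. by rewrite /DD opp_preimage_itvbndbnd /= opprK. Qed.

Lemma mean0 : \int[P]_(x in DD) x = 0.
Proof.
have H : \int[P]_(x in DD) x = \int[P]_(x in DD) (-1 * x).
  rewrite /Rintegral; congr fine.
  transitivity (\int[pushforward P -%R]_(x in DD) (x%:E))%E.
    apply: eq_measure_integral => A mA _; exact/esym/Psym.
  rewrite integral_pushforward //.
  - rewrite preDD; apply: eq_integral => x _ /=; by rewrite mulN1r.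
  - rewrite preDD; apply: (@eq_integrable _ _ _ P DD mDD (EFin \o (fun x => 0 + -1 * x))); last exact: int_lin.
    by move=> x _ /=; rewrite add0r mulN1r.
  - exact: mDD.
move: H; rewrite RintegralZl; [|exact: mDD|exact: int_id].
move=> H; lra.
Qed.
Hypothesis Fm : F (- 2^-1) = 0.
Hypothesis Fp : F (2^-1) = 1.

Lemma PDD1 : fine (P DD) = 1.
Proof.
have -> : fine (P DD) = pr DD by [].
rewrite /DD prcc ?Fm ?Fp ?subr0 //; lra.
Qed.

Lemma Rlin a g : \int[P]_(x in DD) (a + g * x) = a.
Proof.
rewrite RintegralD; last 3 first.
- exact: mDD.
- apply: (@eq_integrable _ _ _ P DD mDD (EFin \o (fun x => a + 0 * x))); last exact: int_lin.
  by move=> x _ /=; rewrite mul0r addr0.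
- apply: (@eq_integrable _ _ _ P DD mDD (EFin \o (fun x => 0 + g * x))); last exact: int_lin.
  by move=> x _ /=; rewrite add0r.
rewrite Rintegral_cst; last exact: mDD.
rewrite PDD1 mulr1 RintegralZl ?mean0 ?mulr0 ?addr0 //; [exact: mDD | exact: int_id].
Qed.

Lemma value_eq Rt qH q1 q2 : 0 < F (2^-1 - Rt) < 1 -> 0 < qH -> 0 < q1 -> 0 < q2 -> qH + q1 + q2 < 1 ->
  value F qH q1 q2 Rt P = qH * (1 - qH - (q1 + q2) * F (2^-1 - Rt))
     + (q1 + q2) / 2 * (F (2^-1 - Rt) - qH - (q1 + q2) * F (2^-1 - Rt)).
Proof.
set b := F (2^-1 - Rt).
move=> hb h1 h2 h3 h4.
have ph1 : phi1 F Rt = b by rewrite /phi1 -Fsym opprB.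
have ph2 : phi2 F Rt = b by [].
have Sb : (q1 + q2) * b < q1 + q2 by rewrite -subr_gt0 -{1}(mulr1 (q1 + q2)) -mulrBr mulr_gt0 // ?subr_gt0; lra.
have Sb0 : 0 < (q1 + q2) * b by rewrite mulr_gt0 //; lra.
have pB : piB F qH q1 q2 Rt = qH + (q1 + q2) * b by rewrite /piB ph1 ph2; ring.
have pBpos : 0 < qH + (q1 + q2) * b by lra.
have pD : piD F qH q1 q2 Rt = 1 - qH - (q1 + q2) * b by rewrite /piD pB; ring.
have pDpos : 0 < 1 - qH - (q1 + q2) * b by lra.
have I2 : \int[P]_(i in DD) Num.max (UD F qH q1 q2 Rt i - U0 qH q1 q2 i) 0 = 0.
  rewrite (@eq_Rintegral _ _ _ P DD (fun _ => 0)); first by rewrite Rintegral_cst ?mul0r //; exact: mDD.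
  move=> i; rewrite inE /DD /= in_itv /= => /andP[i1 i2].
  rewrite max_r //.
  have key : UD F qH q1 q2 Rt i - U0 qH q1 q2 i =
     ((1 - b) * ((2^-1 + i) * q1 + (1 - (2^-1 + i)) * q2) - (1 - qH - (q1 + q2) * b) * (qH + ((2^-1 + i) * q1 + (1 - (2^-1 + i)) * q2))) / (1 - qH - (q1 + q2) * b).
    rewrite /UD /U0 /pDH /pD1 /pD2 pD ph1 ph2; field; lra.
  rewrite key; apply/ltW; rewrite pmulr_llt0 ?invr_gt0 //.
  apply: negE => //; apply/andP; split; lra.
have I1 : \int[P]_(i in DD) Num.max (UB F qH q1 q2 Rt i - U0 qH q1 q2 i) 0 =
   \int[P]_(i in DD) ((qH * (1 - qH - (q1 + q2) * b) + (q1 + q2) / 2 * (b - qH - (q1 + q2) * b)) / (qH + (q1 + q2) * b)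
      + ((q1 - q2) * (b - qH - (q1 + q2) * b)) / (qH + (q1 + q2) * b) * i).
  apply: eq_Rintegral => i; rewrite inE /DD /= in_itv /= => /andP[i1 i2].
  have key : UB F qH q1 q2 Rt i - U0 qH q1 q2 i =
     (qH * (1 - qH - (q1 + q2) * b) + ((2^-1 + i) * q1 + (1 - (2^-1 + i)) * q2) * (b - qH - (q1 + q2) * b)) / (qH + (q1 + q2) * b).
    rewrite /UB /U0 /pBH /pB1 /pB2 pB ph1 ph2; field; lra.
  rewrite max_l; last first.
    rewrite key; apply/ltW; rewrite pmulr_lgt0 ?invr_gt0 //.
    apply: posE => //; apply/andP; split; lra.
  rewrite key; field; lra.
rewrite /value -/DD I1 I2 Rlin pB pD mulr0 addr0; field; lra.
Qed.
End S.

Theorem corollary3 (R : realType) (P : probability R R) (F : R -> R)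
    (Rt sigma : R) :
  (* F is the CDF of the consumer-type distribution P *)
  (forall x, F x = type_cdf P x) ->
  (* continuous, with full support on [-1/2,1/2] *)
  continuous F ->
  F (- 2^-1) = 0 -> F (2^-1) = 1 ->
  (forall x y, - 2^-1 <= x -> x < y -> y <= 2^-1 -> F x < F y) ->
  (* symmetry *)
  (forall i, F (- i) = 1 - F i) ->
  0 < Rt < 1 -> 0 < sigma ->
  let beta := F (2^-1 - Rt) in
  (* q_L = (1-2Q)/(1+sigma) = 1 - q_H - q_1 - q_2 is implicit: V only uses pi^D = 1 - pi^B *)
  let qH Q := (1 - 2 * Q) * sigma / (1 + sigma) in
  let V Q q1 q2 := value F (qH Q) q1 q2 Rt P in
  let c := 3 * sigma - beta - sigma ^+ 2 + sigma ^+ 2 * beta in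
  (* (i) *)
  (0 < c ->
     forall Q q1 q2 Q' q1' q2',
       0 < Q -> Q < Q' -> Q' < 2^-1 ->
       0 < q1 -> 0 < q2 -> q1 + q2 = 2 * Q ->
       0 < q1' -> 0 < q2' -> q1' + q2' = 2 * Q' ->
       V Q' q1' q2' < V Q q1 q2)
  /\ (sigma = 1 -> 0 < c)
  (* (ii) *)
  /\ (c < 0 ->
      let Qs := c / (4 * sigma - 4 * beta - 4 * sigma ^+ 2
                     + 4 * sigma ^+ 2 * beta) in
      0 < Qs < 2^-1 /\
      forall q1s q2s, 0 < q1s -> 0 < q2s -> q1s + q2s = 2 * Qs ->
      forall Q q1 q2, 0 < Q < 2^-1 ->
        0 < q1 -> 0 < q2 -> q1 + q2 = 2 * Q ->
        V Q q1 q2 <= V Qs q1s q2s).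
Proof.
move=> HF Fc Fm Fp Fmono Fsym /andP[R0 R1] s0 beta qH V c.
have hb : 0 < beta < 1.
  apply/andP; split.
    rewrite -Fm; apply: Fmono; lra.
  rewrite -Fp; apply: Fmono; lra.
have VW : forall Q q1 q2, 0 < Q < 2^-1 -> 0 < q1 -> 0 < q2 -> q1 + q2 = 2 * Q ->
    V Q q1 q2 = W _ sigma beta Q.
  move=> Q q1 q2 /andP[Q0 Q1] h1 h2 hS.
  have qHpos : 0 < qH Q by rewrite /qH divr_gt0 ?mulr_gt0 //; lra.
  have qHlt : qH Q + q1 + q2 < 1.
    have : 1 - 2 * Q - qH Q = (1 - 2 * Q) / (1 + sigma) by rewrite /qH; field; lra.
    have : 0 < (1 - 2 * Q) / (1 + sigma) by rewrite divr_gt0 //; lra.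
    lra.
  rewrite /V (@value_eq _ P F HF Fc Fsym Fm Fp) //.
  rewrite hS /W /qH /beta /=; field; lra.
split.
  move=> c0 Q q1 q2 Q' q1' q2' Q0 QQ Q1 h1 h2 hS h1' h2' hS'.
  rewrite !VW //; [exact: Wi | apply/andP; split; lra | apply/andP; split; lra].
split.
  by move=> s1; rewrite /c s1 expr1n mul1r; lra.
move=> c0 Qs.
have [/andP[Qs0 Qs1] Wmax] := @Wii _ sigma beta s0 hb c0.
split; first by apply/andP; split.
move=> q1s q2s h1s h2s hSs Q q1 q2 hQ h1 h2 hS.
rewrite !VW //.
by apply/andP; split.
Qed.
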